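(* If a $C_{p^rq^s}$-transfer system has three or more connected components, then it is not lesser simply paired.
   Context: $p,q$ are distinct primes and $r,s\ge 0$ integers. The subgroups of $C_{p^rq^s}$ are identified with grid points $(i,j)$, $0\le i\le r$, $0\le j\le s$, where $(i,j)$ stands for $C_{p^iq^j}$ (intersection is coordinatewise minimum). A $C_{p^rq^s}$-transfer system is a partial order $\to$ on these vertices such that: $(i_1,j_1)\to(i_2,j_2)$ implies $i_1\le i_2$, $j_1\le j_2$; it is reflexive and transitive; and $(i_1,j_1)\to(i_2,j_2)$ implies $(\min\{i_1,a\},\min\{j_1,b\})\to(\min\{i_2,a\},\min\{j_2,b\})$ for every vertex $(a,b)$. Connected components are those of the underlying undirected graph. A transfer system is saturated if whenever $L\le K\le H$ and $L\to H$ is in it then $K\to H$ is in it; $\mathrm{Hull}(T)$ is the smallest saturated transfer system containing $T$; $T_c$ is the complete transfer system (all $K\to H$ with $K\le H$). A pair $(T,T')$ is compatible if $T\subseteq T'$ and for all subgroups $A,B,C$ with $B,C\le A$: if $B\to A$ is in $T$ and $B\cap C\to B$ is in $T'$ then $C\to A$ is in $T'$. $T$ is lesser simply paired if for every transfer system $T'\supseteq T$, $(T,T')$ is compatible iff $T'\in\{\mathrm{Hull}(T),T_c\}$. *)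

(* Defs.v *)
From mathcomp Require Import all_boot.
Set Implicit Arguments. Unset Strict Implicit. Unset Printing Implicit Defensive.

(* Subgroups of C_{p^r q^s}: grid points (i,j), 0 <= i <= r, 0 <= j <= s;
   (i,j) stands for C_{p^i q^j}. *)
Definition vert (r s : nat) : finType := ('I_r.+1 * 'I_s.+1)%type.

(* subgroup inclusion: coordinatewise order *)
Definition leV {r s : nat} (x y : vert r s) : bool :=
  (x.1 <= y.1)%N && (x.2 <= y.2)%N.

(* intersection: coordinatewise minimum *)
Definition meetV {r s : nat} (x a : vert r s) : vert r s :=
  ((if (x.1 <= a.1)%N then x.1 else a.1), (if (x.2 <= a.2)%N then x.2 else a.2)).

(* A C_{p^r q^s}-transfer system, as a relation  T K H  meaning  K -> H. *)
Definition transfer_system {r s : nat} (T : rel (vert r s)) : Prop :=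
  [/\ (forall x y, T x y -> leV x y),
      (forall x, T x x),
      (forall x y z, T x y -> T y z -> T x z)
    & (forall x y a, T x y -> T (meetV x a) (meetV y a))].

Definition saturated {r s : nat} (T : rel (vert r s)) : Prop :=
  forall L K H, leV L K -> leV K H -> T L H -> T K H.

Definition Hull {r s : nat} (T : rel (vert r s)) (x y : vert r s) : Prop :=
  forall S : rel (vert r s), transfer_system S -> saturated S ->
    (forall a b, T a b -> S a b) -> S x y.

Definition Tc {r s : nat} : rel (vert r s) := fun x y => leV x y.

Definition compatible {r s : nat} (T T' : rel (vert r s)) : Prop :=
  (forall a b, T a b -> T' a b) /\
  (forall A B C : vert r s, leV B A -> leV C A ->
     T B A -> T' (meetV B C) B -> T' C A).

Definition lesser_simply_paired {r s : nat} (T : rel (vert r s)) : Prop :=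
  forall T' : rel (vert r s), transfer_system T' ->
    (forall a b, T a b -> T' a b) ->
    (compatible T T' <->
       ((forall x y, T' x y <-> Hull T x y) \/ (forall x y, T' x y = Tc x y))).

Definition connectedV {r s : nat} (T : rel (vert r s)) : rel (vert r s) :=
  connect (fun x y => T x y || T y x).

Definition three_or_more_components {r s : nat} (T : rel (vert r s)) : Prop :=
  exists a b c : vert r s,
    [/\ ~~ connectedV T a b, ~~ connectedV T a c & ~~ connectedV T b c].

(* Main.v *)
Require Import Defs.
From mathcomp Require Import all_boot.
From mathcomp Require Import zify.
Set Implicit Arguments. Unset Strict Implicit. Unset Printing Implicit Defensive.

Section S.
Variables (r s : nat).
Implicit Types x y z a m : vert r s.

Lemma leV_refl x : leV x x.
Proof. by rewrite /leV !leqnn. Qed.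

Lemma leV_trans x y z : leV x y -> leV y z -> leV x z.
Proof. rewrite /leV => /andP[h1 h2] /andP[h3 h4]; apply/andP; split. exact: leq_trans h1 h3. exact: leq_trans h2 h4. Qed.

Lemma meetV_id x y : leV x y -> meetV x y = x.
Proof. case: x y => [x1 x2] [y1 y2]; rewrite /leV /meetV /= => /andP[h1 h2]. by rewrite (ifT _ _ h1) (ifT _ _ h2). Qed.

Lemma meet1 x a : nat_of_ord (meetV x a).1 = minn x.1 a.1.
Proof. rewrite /meetV /=; case: ifP => h; lia. Qed.
Lemma meet2 x a : nat_of_ord (meetV x a).2 = minn x.2 a.2.
Proof. rewrite /meetV /=; case: ifP => h; lia. Qed.
Lemma meetVC x y : meetV x y = meetV y x.
Proof.
case: (meetV x y) (meet1 x y) (meet2 x y) => u1 u2 /= e1 e2.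
case: (meetV y x) (meet1 y x) (meet2 y x) => v1 v2 /= f1 f2.
by congr pair; apply: val_inj => /=; rewrite ?e1 ?f1 ?e2 ?f2 minnC.
Qed.
Lemma leV_meetl x a : leV (meetV x a) x.
Proof. by rewrite /leV meet1 meet2 !geq_minl. Qed.
Lemma leV_meetr x a : leV (meetV x a) a.
Proof. by rewrite /leV meet1 meet2 !geq_minr. Qed.
Lemma leV_meetmono x y a : leV x y -> leV (meetV x a) (meetV y a).
Proof. rewrite /leV !meet1 !meet2 => /andP[h1 h2]; apply/andP; split; lia. Qed.

Definition topV : vert r s := (ord_max, ord_max).

Lemma leV_top x : leV x topV.
Proof. case: x => [x1 x2]; apply/andP; split; exact: leq_ord. Qed.

Variable T : rel (vert r s).
Hypothesis TS : transfer_system T.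

Definition Rm x y := exists m, T m x /\ T m y.

Lemma conn_edge x y : T x y -> connectedV T x y.
Proof. by move=> h; apply: connect1; rewrite h. Qed.

Lemma conn_sym x y : connectedV T x y = connectedV T y x.
Proof. apply: (@sym_connect_sym _ (fun u v => T u v || T v u)) => u v; by rewrite orbC. Qed.

Lemma conn_trans x y z : connectedV T x y -> connectedV T y z -> connectedV T x z.
Proof. exact: connect_trans. Qed.

Lemma Rm_conn x y : Rm x y -> connectedV T x y.
Proof.
case=> m [h1 h2]; apply: (@conn_trans _ m); last exact: conn_edge.
by rewrite conn_sym; apply: conn_edge.
Qed.

Lemma Rm_trans x z w : Rm x z -> Rm z w -> Rm x w.
Proof.
case: TS => le refl tr res.
case=> m1 [h1 h2] [m2 [h3 h4]].
have e1 : T (meetV m1 m2) m2.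
  by have := res _ _ m2 h2; rewrite (meetVC z) (meetV_id (le _ _ h3)).
have e2 : T (meetV m1 m2) m1.
  by have := res _ _ m1 h3; rewrite (meetVC z) (meetV_id (le _ _ h2)) meetVC.
exists (meetV m1 m2); split; [exact: tr e2 h1 | exact: tr e1 h4].
Qed.

Lemma conn_Rm x y : connectedV T x y -> Rm x y.
Proof.
case: TS => le refl tr res.
move/connectP=> [p]; elim: p x => [|z p IH] x /=.
  by move=> _ ->; exists x.
move=> /andP[e pth] ey; apply: (@Rm_trans _ z); last exact: IH pth ey.
case/orP: e => e; [exists x | exists z]; split => //.
Qed.

Lemma conn_res x y a : connectedV T x y -> connectedV T (meetV x a) (meetV y a).
Proof.
case: TS => le refl tr res.
move/conn_Rm => [m [h1 h2]]; apply: Rm_conn; exists (meetV m a); split; exact: res.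
Qed.

Lemma conn_sat x k y : leV x k -> leV k y -> connectedV T x y -> connectedV T k y.
Proof.
case: TS => le refl tr res.
move=> hxk hky /conn_Rm [m [h1 h2]].
have e1 := res _ _ k h1; rewrite (meetV_id hxk) in e1.
have e2 := res _ _ k h2; rewrite (meetVC y) (meetV_id hky) in e2.
apply: (@conn_trans _ x); last by apply: Rm_conn; exists m.
rewrite conn_sym; apply: Rm_conn; exists (meetV m k); split => //.
Qed.

Lemma top_up x y : leV x y -> connectedV T x topV -> connectedV T y topV.
Proof.
case: TS => le refl tr res.
move=> hxy /conn_Rm [m [h1 h2]].
have e := res _ _ y h2.
rewrite (meetV_id (leV_trans (le _ _ h1) hxy)) (meetVC topV) (meetV_id (leV_top y)) in e.
apply: Rm_conn; exists m; split => //.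
Qed.

Definition S0 : rel (vert r s) := fun x y => leV x y && connectedV T x y.

Lemma S0_ts : transfer_system S0.
Proof.
have [le refl tr res] := TS.
split.
- by move=> x y /andP[].
- by move=> x; rewrite /S0 leV_refl /connectedV connect0.
- move=> x y z /andP[h1 h2] /andP[h3 h4]; rewrite /S0 (leV_trans h1 h3).
  exact: conn_trans h2 h4.
- move=> x y a /andP[h1 h2]; rewrite /S0 conn_res // andbT.
  exact: leV_meetmono.
Qed.

Lemma S0_sat : saturated S0.
Proof. move=> L K H h1 h2 /andP[h3 h4]; rewrite /S0 h2; exact: conn_sat h4. Qed.

Definition T' : rel (vert r s) :=
  fun x y => leV x y && (connectedV T x y || ~~ connectedV T y topV).

Lemma T'_ts : transfer_system T'.
Proof.
have [le refl tr res] := TS.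
split.
- by move=> x y /andP[].
- by move=> x; rewrite /T' leV_refl /connectedV connect0.
- move=> x y z /andP[h1 h2] /andP[h3 h4]; rewrite /T' (leV_trans h1 h3) /=.
  case hz: (connectedV T z topV); rewrite ?orbT // orbF.
  move: h4; rewrite hz orbF => h4.
  have hy : connectedV T y topV by apply: conn_trans h4 hz.
  move: h2; rewrite hy orbF => h2; exact: conn_trans h2 h4.
- move=> x y a /andP[h1 h2]; rewrite /T'.
  have -> : leV (meetV x a) (meetV y a).
    exact: leV_meetmono.
  case/orP: h2 => h2; first by rewrite conn_res.
  apply/orP; right; apply/negP => hc; move/negP: h2; apply.
  exact: top_up (leV_meetl y a) hc.
Qed.

Lemma T'_sat : saturated T'.
Proof.
move=> L K H h1 h2 /andP[h3 h4]; rewrite /T' h2 /=.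
case/orP: h4 => h4; last by rewrite h4 orbT.
by rewrite (conn_sat h1 h2 h4).
Qed.

Lemma T'_compat : compatible T T'.
Proof.
have [le refl tr res] := TS.
have [le' refl' tr' res'] := T'_ts.
split.
  by move=> a b h; rewrite /T' (le _ _ h) (conn_edge h).
move=> A B C hBA hCA hT hT'.
have hBA' : T' B A by rewrite /T' (le _ _ hT) (conn_edge hT).
apply: (T'_sat (L := meetV B C)) => //; first exact: leV_meetr.
exact: tr' hT' hBA'.
Qed.

End S.

Theorem mainTheorem12 (p q r s : nat) (T : rel (vert r s)) :
  prime p -> prime q -> p != q ->
  transfer_system T -> three_or_more_components T ->
  ~ lesser_simply_paired T.
Proof.
move=> _ _ _ TS [a [b [c [hab hac hbc]]]] LSP.
pose z : vert r s := (ord0, ord0).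
have hz x : leV z x by rewrite /leV.
have [y [hy0 hyt]] : exists y, ~~ connectedV T y z /\ ~~ connectedV T y (topV r s).
  { have J : forall u v w, connectedV T u w -> connectedV T v w -> connectedV T u v.
    by move=> u v w h1 h2; apply: (conn_trans h1); rewrite conn_sym.
  case Ca0: (connectedV T a z); case Cat: (connectedV T a (topV r s)).
  all: case Cb0: (connectedV T b z); case Cbt: (connectedV T b (topV r s)).
  all: try (by exists a; rewrite Ca0 Cat).
  all: try (by exists b; rewrite Cb0 Cbt).
  all: exists c.
  all: case Cc0: (connectedV T c z); case Cct: (connectedV T c (topV r s)) => //.
  all: exfalso.
  all: first [ by move/negP: hab; apply; apply: J Ca0 Cb0
             | by move/negP: hab; apply; apply: J Cat Cbt
             | by move/negP: hac; apply; apply: J Ca0 Cc0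
             | by move/negP: hac; apply; apply: J Cat Cct
             | by move/negP: hbc; apply; apply: J Cb0 Cc0
             | by move/negP: hbc; apply; apply: J Cbt Cct ]. }
have [H1 _] := LSP (T' T) (T'_ts TS)
  (fun a b h => (T'_compat TS).1 a b h).
case: (H1 (T'_compat TS)) => [E|E].
- have hT' : T' T z y by rewrite /T' hz hyt orbT.
  have /(E z y) HH := hT'.
  have hsub : forall a b, T a b -> S0 T a b.
    by case: TS => le _ _ _ a' b' h; rewrite /S0 (le _ _ h) (conn_edge h).
  have := HH (S0 T) (S0_ts TS) (S0_sat TS) hsub.
  by rewrite /S0 conn_sym (negbTE hy0) andbF.
- have := E y (topV r s); rewrite /T' /Tc leV_top (negbTE hyt) /connectedV connect0.
  by [].
Qed.
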